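(* Let $\mathcal{H}$ be a complex separable Hilbert space and let $T = MN - NM$ where $M, N \in \mathcal{B}(\mathcal{H})$ satisfy $M^2 = 0 = N^2$. Then for every $0 \ne \alpha \in \mathbb{C}$ and every integer $k \ge 1$, \[ \dim \ker (T - \alpha I)^k = \dim \ker (T + \alpha I)^k. \] *)

(* Defs.v *)
From HB Require Import structures.
From mathcomp Require Import all_boot all_order all_algebra.
From mathcomp Require Import reals.
From mathcomp.real_closed Require Import complex.
Set Implicit Arguments. Unset Strict Implicit. Unset Printing Implicit Defensive.
Import Order.TTheory GRing.Theory Num.Theory.
Local Open Scope ring_scope.

Section Hilbert.
Variable R : realType.
Local Notation C := (R[i]).
Variable V : lmodType C.

Definition is_inner_product (ip : V -> V -> C) : Prop :=
  [/\ (forall (a : C) (x y z : V), ip (a *: x + y) z = a * ip x z + ip y z),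
      (forall x y : V, ip y x = conjc (ip x y)),
      (forall x : V, 0 <= ip x x) &
      (forall x : V, ip x x = 0 -> x = 0)].

Definition ipnorm (ip : V -> V -> C) (x : V) : R := Num.sqrt (complex.Re (ip x x)).

Definition ip_complete (ip : V -> V -> C) : Prop :=
  forall u : nat -> V,
    (forall e : R, 0 < e -> exists N : nat, forall m n : nat,
        (N <= m)%N -> (N <= n)%N -> ipnorm ip (u m - u n) < e) ->
    exists l : V, forall e : R, 0 < e -> exists N : nat, forall n : nat,
        (N <= n)%N -> ipnorm ip (u n - l) < e.

Definition ip_separable (ip : V -> V -> C) : Prop :=
  exists d : nat -> V, forall (x : V) (e : R), 0 < e ->
    exists n : nat, ipnorm ip (x - d n) < e.

Definition separable_hilbert (ip : V -> V -> C) : Prop :=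
  [/\ is_inner_product ip, ip_complete ip & ip_separable ip].

Definition bounded_op (ip : V -> V -> C) (A : V -> V) : Prop :=
  linear A /\ exists c : R, forall x : V, ipnorm ip (A x) <= c * ipnorm ip x.

Definition has_dim (S : V -> Prop) (n : nat) : Prop :=
  exists b : 'I_n -> V,
    [/\ (forall i, S (b i)),
        (forall c : 'I_n -> C, \sum_(i < n) c i *: b i = 0 -> forall i, c i = 0) &
        (forall x, S x -> exists c : 'I_n -> C, x = \sum_(i < n) c i *: b i)].

(* Equality of dimensions in {0,1,2,...} u {infinite}: the two subspaces
   have the same finite dimension, or are both infinite-dimensional. *)
Definition same_dim (S1 S2 : V -> Prop) : Prop :=
  forall n : nat, has_dim S1 n <-> has_dim S2 n.

Definition kerop (A : V -> V) : V -> Prop := fun x => A x = 0.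

End Hilbert.

(* Main.v *)
Require Import Defs.
From HB Require Import structures.
From mathcomp Require Import all_boot all_order all_algebra.
From mathcomp Require Import reals.
From mathcomp.real_closed Require Import complex.
Import Order.TTheory GRing.Theory Num.Theory.
Local Open Scope ring_scope.

Section Gen.
Variable R : realType.
Local Notation C := (R[i]).
Variable V : lmodType C.

Section Lin.
Variable f : V -> V.
Hypothesis Hf : linear f.
Lemma lin0 : f 0 = 0.
Proof.
have := Hf 1 0 0; rewrite !scale1r !addr0 => H.
by apply: (addrI (f 0)); rewrite addr0 -H.
Qed.
Lemma linD u v : f (u + v) = f u + f v.
Proof. by have := Hf 1 u v; rewrite !scale1r. Qed.
Lemma linZ a u : f (a *: u) = a *: f u.
Proof. by have := Hf a u 0; rewrite !addr0 lin0 addr0. Qed.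
Lemma linN u : f (- u) = - f u.
Proof. by rewrite -scaleN1r linZ scaleN1r. Qed.
Lemma linB u v : f (u - v) = f u - f v.
Proof. by rewrite linD linN. Qed.
Lemma lin_sum n (c : 'I_n -> C) (b : 'I_n -> V) :
  f (\sum_(i < n) c i *: b i) = \sum_(i < n) c i *: f (b i).
Proof.
rewrite (big_morph f linD lin0); apply: eq_bigr => i _; exact: linZ.
Qed.
End Lin.
Arguments lin0 {f}. Arguments linD {f}. Arguments linZ {f}. Arguments linN {f}. Arguments linB {f}. Arguments lin_sum {f}.

Lemma lin_comp (f g : V -> V) : linear f -> linear g -> linear (fun x => f (g x)).
Proof. by move=> Hf Hg a u v /=; rewrite Hg Hf. Qed.

Lemma lin_iter (f : V -> V) k : linear f -> linear (iter k f).
Proof.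
move=> Hf; elim: k => [|k IH] a u v /=; first by [].
by rewrite IH Hf.
Qed.

Lemma has_dim_ext (S1 S2 : V -> Prop) n :
  (forall x, S1 x <-> S2 x) -> has_dim S1 n -> has_dim S2 n.
Proof.
move=> E [b [H1 H2 H3]]; exists b; split => //.
- by move=> i; apply/E.
- by move=> x /E; apply: H3.
Qed.

Lemma transfer (F1 F2 L : V -> V) n :
  linear F1 -> linear L ->
  (forall x, F1 x = 0 -> F2 (L x) = 0) ->
  (forall x, F1 x = 0 -> L x = 0 -> x = 0) ->
  (forall y, F2 y = 0 -> exists x, F1 x = 0 /\ L x = y) ->
  has_dim (kerop F1) n -> has_dim (kerop F2) n.
Proof.
move=> HF HL Hmap Hinj Hsurj [b [H1 H2 H3]].
exists (fun i => L (b i)); split.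
- by move=> i; apply: Hmap; apply: H1.
- move=> c Hc; apply: H2; apply: Hinj.
    by rewrite /kerop lin_sum //; apply: big1 => i _; rewrite H1 scaler0.
  by rewrite lin_sum.
- move=> y /Hsurj [x [Hx <-]]; have [c ->] := H3 x Hx.
  by exists c; rewrite lin_sum.
Qed.

Variables T L : V -> V.
Hypothesis HT : linear T.
Hypothesis HL : linear L.
Hypothesis HTT : forall x, T (T x) = L (L (L (L x))).
Hypothesis HLT : forall x, L (T x) = - T (L x).

Definition A (b : C) := fun x => T x - b *: x.

Lemma A_lin b : linear (A b).
Proof.
move=> a u v; rewrite /A HT scalerDr scalerA mulrC -scalerA.
rewrite scalerBr; set p := a *: T u; set q := a *: (b *: u).
by rewrite opprD !addrA; congr (_ - _); rewrite -!addrA; congr (_ + _); rewrite addrC.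
Qed.

Lemma iterA_T b k x : iter k (A b) (T x) = T (iter k (A b) x).
Proof.
elim: k => [|k IH] //=; by rewrite IH /A (linB HT) (linZ HT).
Qed.

Lemma iterA_L b k x : iter k (A (- b)) (L x) = (-1) ^+ k *: L (iter k (A b) x).
Proof.
elim: k => [|k IH] /=; first by rewrite scale1r.
rewrite IH linZ; last exact: A_lin.
rewrite exprSr -scalerA; congr (_ *: _).
rewrite /A (linB HL) (linZ HL) HLT scaleN1r scaleNr; set u := L _; set w := T u. by rewrite opprB !opprK addrC.
Qed.

Lemma Tinj b k x : b != 0 -> iter k (A b) x = 0 -> T x = 0 -> x = 0.
Proof.
move=> Hb Hk Hx.
have E : forall j, iter j (A b) x = (- b) ^+ j *: x.
  elim=> [|j IH] /=; first by rewrite scale1r.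
  rewrite IH linZ; last exact: A_lin.
  by rewrite /A Hx sub0r exprSr -scalerA scaleNr scalerN.
move: Hk; rewrite E => /eqP; rewrite scaler_eq0 expf_eq0 oppr_eq0 (negbTE Hb) andbF /=.
by move/eqP.
Qed.

Lemma Tsurj b k : b != 0 -> forall x, iter k (A b) x = 0 ->
  exists y, iter k (A b) y = 0 /\ T y = x.
Proof.
move=> Hb; elim: k => [|k IH] x /= Hx.
  by exists 0; split => //; rewrite Hx lin0.
have Hx' : iter k.+1 (A b) x = 0 := Hx.
move: Hx; rewrite -/(iter k.+1 (A b) x) iterSr => /IH [w [Hw1 Hw2]].
have HA : linear (iter k.+1 (A b)) := lin_iter _ _ (A_lin b).
exists (b^-1 *: (x - w)); split.
  change (iter k.+1 (A b) (b^-1 *: (x - w)) = 0); rewrite (linZ HA) (linB HA) Hx' [iter k.+1 _ w]iterS Hw1 (lin0 (A_lin b)).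
  by rewrite subrr scaler0.
by rewrite linZ // linB // Hw2 /A opprB addrC addrNK scalerA mulVf // scale1r.
Qed.


Lemma Lmap b k x : iter k (A b) x = 0 -> iter k (A (-b)) (L x) = 0.
Proof. by move=> H; rewrite iterA_L H (lin0 HL) scaler0. Qed.

Lemma Linj b k x : b != 0 -> iter k (A b) x = 0 -> L x = 0 -> x = 0.
Proof.
move=> Hb Hx HLx.
have HTx : iter k (A b) (T x) = 0 by rewrite iterA_T Hx (lin0 HT).
have T2 : T (T x) = 0 by rewrite HTT HLx !(lin0 HL).
have T1 : T x = 0 := @Tinj b k (T x) Hb HTx T2.
exact: (@Tinj b k x Hb Hx T1).
Qed.

Lemma Lsurj b k y : b != 0 -> iter k (A (-b)) y = 0 ->
  exists x, iter k (A b) x = 0 /\ L x = y.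
Proof.
move=> Hb Hy.
have Hb' : - b != 0 by rewrite oppr_eq0.
have [z1 [Hz1 <-]] := @Tsurj (-b) k Hb' y Hy.
have [z [Hz <-]] := @Tsurj (-b) k Hb' z1 Hz1.
exists (L (L (L z))); split; last by rewrite HTT.
have H1 : iter k (A b) (L z) = 0 by rewrite -[b]opprK; apply: Lmap.
have H2 := @Lmap b k _ H1.
by rewrite -[b]opprK; apply: Lmap.
Qed.

Lemma samedim b k : b != 0 ->
  same_dim (kerop (iter k (A b))) (kerop (iter k (A (-b)))).
Proof.
move=> Hb n; have Hb' : - b != 0 by rewrite oppr_eq0.
have HAk : forall c, linear (iter k (A c)) := fun c => lin_iter _ _ (A_lin c).
split; apply: (@transfer _ _ L n (HAk _) HL).
- by move=> x; apply: Lmap.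
- by move=> x; apply: Linj.
- by move=> y; apply: Lsurj.
- by move=> x Hx; rewrite -[b]opprK; apply: Lmap.
- by move=> x; apply: Linj.
- by move=> y Hy; apply: Lsurj => //; rewrite opprK.
Qed.

End Gen.
Arguments lin0 {R V f}. Arguments linD {R V f}. Arguments linZ {R V f}. Arguments linN {R V f}. Arguments linB {R V f}.

Theorem theorem2p08 (R : realType) (V : lmodType R[i]) (ip : V -> V -> R[i])
  (HV : separable_hilbert ip) (M N : V -> V)
  (HM : bounded_op ip M) (HN : bounded_op ip N)
  (HM2 : forall x, M (M x) = 0) (HN2 : forall x, N (N x) = 0)
  (alpha : R[i]) (Halpha : alpha != 0) (k : nat) (Hk : (1 <= k)%N) :
  let T := fun x => M (N x) - N (M x) in
  same_dim (kerop (iter k (fun x => T x - alpha *: x)))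
           (kerop (iter k (fun x => T x + alpha *: x))).
Proof.
move=> T.
have [LM _] := HM; have [LN _] := HN.
pose L := fun x => M x + N x.
have HT : linear T.
  move=> a u v; rewrite /T (LN a) (LM a) (LM a) (LN a).
  rewrite scalerBr opprD !addrA; congr (_ - _); rewrite -!addrA; congr (_ + _).
  by rewrite addrC.
have HL : linear L.
  move=> a u v; rewrite /L (LN a) (LM a) scalerDr !addrA; congr (_ + _).
  by rewrite -!addrA; congr (_ + _); rewrite addrC.
have HTT : forall x, T (T x) = L (L (L (L x))).
  move=> x; rewrite /T /L.
  rewrite !(linB LM, linB LN, linD LM, linD LN, linN LM, linN LN) !(HM2, HN2) !(lin0 LM, lin0 LN, oppr0).
  by rewrite !(add0r, addr0, subr0, sub0r, opprK, opprD, oppr0).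
have HLT : forall x, L (T x) = - T (L x).
  move=> x; rewrite /T /L.
  rewrite !(linB LM, linB LN, linD LM, linD LN, linN LM, linN LN) !(HM2, HN2) !(lin0 LM, lin0 LN, oppr0).
  by rewrite !(add0r, addr0, subr0, sub0r, opprK, opprD, oppr0).
have H := @samedim R V T L HT HL HTT HLT alpha k Halpha.
move=> n; have E : forall x, kerop (iter k (@A R V T (- alpha))) x <->
    kerop (iter k (fun x => T x + alpha *: x)) x.
  move=> x; rewrite /kerop (@eq_iter _ _ (fun x => T x + alpha *: x)) //.
  by move=> y; rewrite /A scaleNr opprK.
split => Hd.
- by apply: (@has_dim_ext R V _ _ n E); apply/(H n).
- by apply/(H n); apply: (@has_dim_ext R V _ _ n (fun x => iff_sym (E x)) Hd).
Qed.
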